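(* Let $n\equiv 0\pmod 3$. If there exist a ${}^{1}\mathrm{cDCQS}(g^n:2)$ and an $\mathrm{RDSQS}(g+2)$, then there exists an $\mathrm{mcDSQS}(gn+2)$.
   Context: A Steiner triple system $\mathrm{STS}(v)$: a $v$-set with $3$-subsets (blocks) such that each pair lies in exactly one block. A partial parallel class (PPC) of a set $Y$ is a set of pairwise disjoint blocks contained in $Y$; a parallel class (PC) of $Y$ is a PPC whose union is $Y$; a design is resolvable if its blocks partition into PCs of its point set. $\chi'(v)$ is the minimum over all $\mathrm{STS}(v)$ of the least number of PPCs into which its block set can be partitioned; an $\mathrm{STS}(v)$ admitting a partition into $\chi'(v)$ PPCs is an $\mathrm{mcSTS}(v)$. An $\mathrm{SQS}(v)$ is a $v$-set $X$ with $4$-subsets such that each $3$-subset lies in exactly one block; its derived design at $x$ is $\{B\setminus\{x\}:x\in B\}$ on $X\setminus\{x\}$. An $\mathrm{mcDSQS}(v)$ is an $\mathrm{SQS}(v)$ all of whose derived designs are $\mathrm{mcSTS}(v-1)$; an $\mathrm{RDSQS}(v)$ is an $\mathrm{SQS}(v)$ all of whose derived designs are resolvable. An incomplete $\mathrm{STS}(v,h)$ is $(Y,H,\mathcal{B})$, $|Y|=v$, $|H|=h$, each pair of $Y$ not inside $H$ in exactly one block and no pair inside $H$ in a block; it is a $\mathrm{gcSTS}(v,h)$ if $\mathcal{B}$ partitions into $\chi'(v)$ PPCs of $Y$ of which $\chi'(v)-\frac{v-h}{2}$ are PPCs of $Y\setminus H$. A $\mathrm{GDD}(2,3,gn)$ of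 type $g^n$ is $(Z,\mathcal{G},\mathcal{B})$, $\mathcal{G}$ a partition of $Z$ into $n$ groups of size $g$, $\mathcal{B}$ triples meeting each group in at most one point with each pair from distinct groups in exactly one block. For $g$ even, it is good colorable ($\mathrm{gcGDD}$) if $\mathcal{B}=\big(\bigcup_{G\in\mathcal{G},1\le i\le g/2}P_G^i\big)\cup P_H^*$ (a partition) where each $P_G^i$ is a PPC of $Z\setminus G$ and $P_H^*$ is a PPC of $Z\setminus H$ for some $H\in\mathcal{G}$, the special group. A $\mathrm{CQS}(g^n:s)$ is $(X,S,\mathcal{G},\mathcal{A})$ with $|S|=s$, $\mathcal{G}$ a partition of $X\setminus S$ into $n$ groups of size $g$, $\mathcal{A}$ a set of $4$-subsets such that every $3$-subset not contained in any $S\cup G$ lies in exactly one block and none contained in some $S\cup G$ lies in a block. With $\mathcal{A}_x=\{A\setminus\{x\}:x\in A\in\mathcal{A}\}$, a ${}^{1}\mathrm{cDCQS}(g^n:2)$ (for $g$ even) is a $\mathrm{CQS}(g^n:2)$ such that for each $x\in G\in\mathcal{G}$, $(X\setminus\{x\},(G\cup S)\setminus\{x\},\mathcal{A}_x)$ is a $\mathrm{gcSTS}(gn+1,g+1)$, and for each $x\in S$, $(X\setminus S,\mathcal{G},\mathcal{A}_x)$ is a $\mathrm{gcGDD}(2,3,gn)$ of type $g^n$, with the same special group for both points of $S$. *)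

(* Defs.v *)
From mathcomp Require Import all_boot.
Set Implicit Arguments. Unset Strict Implicit. Unset Printing Implicit Defensive.

Section Designs.
Variable T : finType.

Definition proper_col (K : Type) (B : {set {set T}}) (c : {set T} -> K) :=
  forall b1 b2, b1 \in B -> b2 \in B -> b1 != b2 -> c b1 = c b2 ->
    [disjoint b1 & b2].

Definition colourable (B : {set {set T}}) (k : nat) :=
  exists c : {set T} -> 'I_k, proper_col B c.

Definition is_STS (Y : {set T}) (B : {set {set T}}) :=
  (forall b, b \in B -> b \subset Y /\ #|b| = 3) /\
  (forall x y, x \in Y -> y \in Y -> x != y ->
     #|[set b in B | (x \in b) && (y \in b)]| = 1).

Definition resolvable (Y : {set T}) (B : {set {set T}}) :=
  exists m (c : {set T} -> 'I_m), proper_col B c /\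
    forall i : 'I_m, \bigcup_(b in B | c b == i) b = Y.

Definition is_SQS (X : {set T}) (A : {set {set T}}) :=
  (forall a, a \in A -> a \subset X /\ #|a| = 4) /\
  (forall t : {set T}, t \subset X -> #|t| = 3 -> #|[set a in A | t \subset a]| = 1).

Definition derived (A : {set {set T}}) (x : T) : {set {set T}} :=
  [set a :\ x | a in [set a0 in A | x \in a0]].
End Designs.

(* chi_is v k  :  k = chi'(v), the minimum over all STS(v) (taken, up to
   isomorphism, on the point set 'I_v) of the least number of PPCs into
   which the block set can be partitioned. *)
Definition chi_is (v k : nat) :=
  (exists B : {set {set 'I_v}}, is_STS [set: 'I_v] B /\ colourable B k) /\
  (forall (B : {set {set 'I_v}}) (j : nat),
      is_STS [set: 'I_v] B -> colourable B j -> k <= j).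

Section Designs2.
Variable T : finType.

Definition mcSTS (Y : {set T}) (B : {set {set T}}) :=
  is_STS Y B /\ exists k, chi_is #|Y| k /\ colourable B k.

Definition RDSQS (X : {set T}) (A : {set {set T}}) :=
  is_SQS X A /\ forall x, x \in X -> resolvable (X :\ x) (derived A x).

Definition mcDSQS (X : {set T}) (A : {set {set T}}) :=
  is_SQS X A /\ forall x, x \in X -> mcSTS (X :\ x) (derived A x).

Definition incomplete_STS (Y H : {set T}) (B : {set {set T}}) :=
  H \subset Y /\
  (forall b, b \in B -> b \subset Y /\ #|b| = 3) /\
  (forall x y, x \in Y -> y \in Y -> x != y -> ~~ ((x \in H) && (y \in H)) ->
     #|[set b in B | (x \in b) && (y \in b)]| = 1) /\
  (forall b, b \in B -> #|b :&: H| <= 1).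

Definition gcSTS (Y H : {set T}) (B : {set {set T}}) :=
  incomplete_STS Y H B /\
  exists k, chi_is #|Y| k /\
    exists c : {set T} -> 'I_k, proper_col B c /\
      exists C : {set 'I_k}, #|C| = k - (#|Y| - #|H|) %/ 2 /\
        forall b, b \in B -> c b \in C -> [disjoint b & H].

Definition GDD (Z : {set T}) (G : {set {set T}}) (g n : nat)
    (B : {set {set T}}) :=
  partition G Z /\ #|G| = n /\ (forall G0, G0 \in G -> #|G0| = g) /\
  (forall b, b \in B -> b \subset Z /\ #|b| = 3) /\
  (forall b G0, b \in B -> G0 \in G -> #|b :&: G0| <= 1) /\
  (forall x y, x \in Z -> y \in Z -> pblock G x != pblock G y ->
     #|[set b in B | (x \in b) && (y \in b)]| = 1).

(* good colourable GDD (g even) with special group H: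
   B = (U_{G0 in G, i < g/2} P_{G0}^i) U P_H^*, P_{G0}^i a PPC of Z \ G0,
   P_H^* a PPC of Z \ H. The colour Some (G0, i) encodes P_{G0}^i and the
   colour None encodes P_H^*. *)
Definition gcGDD (Z : {set T}) (G : {set {set T}}) (g n : nat)
    (B : {set {set T}}) (H : {set T}) :=
  ~~ odd g /\ GDD Z G g n B /\ H \in G /\
  exists c : {set T} -> option ({set T} * 'I_(g %/ 2)),
    proper_col B c /\
    forall b, b \in B ->
      match c b with
      | Some (G0, _) => G0 \in G /\ [disjoint b & G0]
      | None => [disjoint b & H]
      end.

Definition CQS (X S : {set T}) (G : {set {set T}}) (g n : nat)
    (A : {set {set T}}) :=
  S \subset X /\ partition G (X :\: S) /\ #|G| = n /\
  (forall G0, G0 \in G -> #|G0| = g) /\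
  (forall a, a \in A -> a \subset X /\ #|a| = 4) /\
  (forall t : {set T}, t \subset X -> #|t| = 3 ->
     (forall G0, G0 \in G -> ~~ (t \subset S :|: G0)) ->
     #|[set a in A | t \subset a]| = 1) /\
  (forall t : {set T}, t \subset X -> #|t| = 3 ->
     (exists G0, G0 \in G /\ t \subset S :|: G0) ->
     #|[set a in A | t \subset a]| = 0).

Definition cDCQS1 (X S : {set T}) (G : {set {set T}}) (g n : nat)
    (A : {set {set T}}) :=
  CQS X S G g n A /\ #|S| = 2 /\
  (forall G0 x, G0 \in G -> x \in G0 ->
     gcSTS (X :\ x) ((G0 :|: S) :\ x) (derived A x)) /\
  (exists H, forall x, x \in S -> gcGDD (X :\: S) G g n (derived A x) H).
End Designs2.

Definition exists_cDCQS1 (g n : nat) :=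
  exists (S : {set 'I_(g * n + 2)}) (G : {set {set 'I_(g * n + 2)}})
         (A : {set {set 'I_(g * n + 2)}}),
    cDCQS1 [set: 'I_(g * n + 2)] S G g n A.

Definition exists_RDSQS (v : nat) :=
  exists A : {set {set 'I_v}}, RDSQS [set: 'I_v] A.

Definition exists_mcDSQS (v : nat) :=
  exists A : {set {set 'I_v}}, mcDSQS [set: 'I_v] A.

(* Main.v *)
Require Import Defs.
From mathcomp Require Import all_boot zify.
From Stdlib Require Import IndefiniteDescription.
Set Implicit Arguments. Unset Strict Implicit. Unset Printing Implicit Defensive.
Lemma card_cover_const (T : finType) (P : {set {set T}}) s :
  (forall A, A \in P -> #|A| = s) ->
  {in P &, forall A B : {set T}, A != B -> [disjoint A & B]} -> #|cover P| = #|P| * s.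
Proof.
move=> hs hd; have /eqP tP : trivIset P by apply/trivIsetP.
by rewrite -tP (eq_bigr (fun _ => s)) // sum_nat_const.
Qed.

Lemma disjP (T: finType) (A B : {set T}) :
  reflect (forall x, x \in A -> x \in B -> False) [disjoint A & B].
Proof.
apply: (iffP pred0P) => [h x xA xB | h x /=].
  by move: (h x); rewrite /= xA xB.
by apply/negbTE/negP => /andP[/h]; apply.
Qed.

Lemma derivedP (T : finType) (A : {set {set T}}) x b :
  reflect (exists2 a, a \in A & x \in a /\ b = a :\ x) (b \in derived A x).
Proof.
apply: (iffP imsetP).
  by case=> a; rewrite inE => /andP[aA xa] ->; exists a.
by case=> a aA [xa ->]; exists a => //; rewrite inE aA.
Qed.

Lemma card3 (T : finType) (x y z : T) : x != y -> x != z -> y != z ->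
  #|[set x; y; z]| = 3.
Proof.
move=> xy xz yz; rewrite -setUA cardsU1 cards2 yz !inE negb_or xy xz //.
Qed.

Lemma mem3 (T : finType) (x y z w : T) :
  (w \in [set x; y; z]) = [|| w == x, w == y | w == z].
Proof. by rewrite !inE orbA. Qed.

Lemma sqs_sts (T : finType) (X : {set T}) A x :
  is_SQS X A -> x \in X -> is_STS (X :\ x) (derived A x).
Proof.
move=> [hb hc] xX; split.
  move=> b /derivedP[a aA [xa ->]]; have [aX ca] := hb a aA.
  split; first by apply: setSD.
  by move: ca; rewrite (cardsD1 x a) xa add1n => -[].
move=> y z; rewrite !in_setD1 => /andP[yx yX] /andP[zx zX] yz.
have t3 : #|[set x; y; z]| = 3 by rewrite card3 // eq_sym.
have tX : [set x; y; z] \subset X.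
  by apply/subsetP => w; rewrite mem3 => /or3P[] /eqP->.
have /eqP/cards1P[a0 ha0] := hc _ tX t3.
have : a0 \in [set a in A | [set x; y; z] \subset a] by rewrite ha0 set11.
rewrite inE => /andP[a0A /subsetP ts].
apply/eqP/cards1P; exists (a0 :\ x); apply/setP => b; rewrite !inE.
apply/andP/eqP.
  case=> /derivedP[a aA [xa ->]]; rewrite !inE => /andP[/andP[_ ya] /andP[_ za]].
  suff : a \in [set a in A | [set x; y; z] \subset a] by rewrite ha0 inE => /eqP->.
  rewrite inE aA; apply/subsetP => w; rewrite mem3 => /or3P[] /eqP-> //.
move=> ->; split; last by rewrite !inE yx zx !ts // !inE eqxx ?orbT.
apply/derivedP; exists a0 => //; split => //; apply: ts; by rewrite !inE eqxx.
Qed.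

Lemma sts_uniq (T : finType) (Y : {set T}) B x y b1 b2 :
  is_STS Y B -> x \in Y -> y \in Y -> x != y ->
  b1 \in B -> b2 \in B -> x \in b1 -> y \in b1 -> x \in b2 -> y \in b2 -> b1 = b2.
Proof.
move=> [_ hc] xY yY xy b1B b2B x1 y1 x2 y2.
have /eqP/cards1P[a0 ha0] := hc _ _ xY yY xy.
have : b1 \in [set b in B | (x \in b) && (y \in b)] by rewrite inE b1B x1 y1.
have : b2 \in [set b in B | (x \in b) && (y \in b)] by rewrite inE b2B x2 y2.
by rewrite ha0 !inE => /eqP-> /eqP->.
Qed.

Lemma sts_point (T : finType) (Y : {set T}) B p :
  is_STS Y B -> p \in Y -> #|Y| = (#|[set b in B | p \in b]| * 2).+1.
Proof.
move=> sts pY; have [hb hc] := sts.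
set Bp := [set b in B | p \in b].
set P := [set b :\ p | b in Bp].
have injP : {in Bp &, injective (fun b => b :\ p)}.
  move=> b1 b2; rewrite !inE => /andP[_ p1] /andP[_ p2] e.
  by rewrite -(setD1K p1) -(setD1K p2) e.
have cP : cover P = Y :\ p.
  apply/setP => y; apply/bigcupP/idP.
    case=> A0 /imsetP[b]; rewrite inE => /andP[bB pb] ->.
    rewrite !inE => /andP[yp yb]; rewrite yp /=.
    by have [/subsetP sb _] := hb b bB; apply: sb.
  rewrite !inE => /andP[yp yY].
  have py : p != y by rewrite eq_sym.
  have /eqP/cards1P[b0 hb0] := hc _ _ pY yY py.
  have : b0 \in [set b in B | (p \in b) && (y \in b)] by rewrite hb0 set11.
  rewrite inE => /and3P[b0B pb0 yb0].
  exists (b0 :\ p); first by apply: imset_f; rewrite inE b0B pb0.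
  by rewrite !inE yp yb0.
have : #|cover P| = #|P| * 2.
  apply: card_cover_const.
    move=> A0 /imsetP[b]; rewrite inE => /andP[bB pb] ->.
    have [_ cb] := hb b bB; move: cb; rewrite (cardsD1 p) pb add1n.
    by case.
  move=> A1 A2 /imsetP[b1 + ->] /imsetP[b2 + ->].
  rewrite !inE => /andP[b1B p1] /andP[b2B p2] ne.
  apply/disjP => y; rewrite !inE => /andP[yp y1] /andP[_ y2].
  have [/subsetP s1 _] := hb b1 b1B.
  have py : p != y by rewrite eq_sym.
  have e := sts_uniq sts pY (s1 y y1) py b1B b2B p1 y1 p2 y2.
  by move: ne; rewrite e eqxx.
rewrite cP card_in_imset // => <-.
by rewrite (cardsD1 p Y) pY add1n.
Qed.

Lemma chi_lb (T : finType) (Y : {set T}) B j (c : {set T} -> 'I_j) p :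
  is_STS Y B -> proper_col B c -> p \in Y -> #|Y| %% 3 = 1 -> #|Y| + 1 <= 2 * j.
Proof.
move=> sts hp pY h3; have [hb _] := sts.
have inj q : {in [set b in B | q \in b] &, injective c}.
  move=> b1 b2; rewrite !inE => /andP[b1B q1] /andP[b2B q2] e.
  apply/eqP/negPn/negP => ne.
  by move: (hp b1 b2 b1B b2B ne e) => /disjP/(_ q q1 q2).
have rq q : q \in Y -> #|Y| = (#|c @: [set b in B | q \in b]| * 2).+1.
  by move=> qY; rewrite card_in_imset // -(sts_point sts qY).
have le q : #|c @: [set b in B | q \in b]| <= j.
  by rewrite -[X in _ <= X]card_ord -cardsT; apply: subset_leq_card; apply: subsetT.
rewrite leqNgt; apply/negP => hlt.
have hj q : q \in Y -> c @: [set b in B | q \in b] = setT.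
  move=> qY; apply/eqP; rewrite eqEcard subsetT cardsT card_ord.
  have := rq q qY; lia.
set i := c set0.
set Ci := [set b in B | c b == i].
have cov : cover Ci = Y.
  apply/setP => y; apply/bigcupP/idP.
    case=> b; rewrite inE => /andP[bB _] yb.
    by have [/subsetP sb _] := hb b bB; apply: sb.
  move=> yY; have : i \in c @: [set b in B | y \in b] by rewrite hj // inE.
  case/imsetP => b; rewrite inE => /andP[bB yb] ei.
  by exists b => //; rewrite inE bB -ei eqxx.
have := @card_cover_const _ Ci 3.
rewrite cov => h; move: h3; rewrite h ?modnMl //.
  by move=> b; rewrite inE => /andP[bB _]; have [_ ->] := hb b bB.
move=> b1 b2; rewrite !inE => /andP[b1B /eqP e1] /andP[b2B /eqP e2] ne.
by apply: hp; rewrite // e1 e2.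
Qed.

Lemma resolv_bound (T : finType) (Y : {set T}) B g :
  is_STS Y B -> resolvable Y B -> #|Y| = g.+1 ->
  exists c : {set T} -> nat, (forall b, b \in B -> c b < g %/ 2) /\ proper_col B c.
Proof.
move=> sts [m [c [hp hcov]]] hY.
have [p pY] : exists p, p \in Y.
  by apply/set0Pn; rewrite -card_gt0 hY.
have hr := sts_point sts pY.
have hm : m <= #|[set b in B | p \in b]|.
  apply: (leq_trans _ (leq_imset_card c _)).
  rewrite -[X in X <= _]card_ord -cardsT; apply: subset_leq_card.
  apply/subsetP => i _; move: pY; rewrite -(hcov i) => /bigcupP[b /andP[bB /eqP ci] pb].
  by apply/imsetP; exists b; rewrite // inE bB pb.
exists (fun b => val (c b)); split.
  move=> b _; apply: (leq_trans (ltn_ord (c b))); move: hr hm; rewrite hY; lia.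
move=> b1 b2 b1B b2B ne /val_inj; exact: hp.
Qed.

Section Transport.
Definition imB (U T : finType) (f : U -> T) (A' : {set {set U}}) : {set {set T}} :=
  [set f @: (a : {set U}) | a in A'].

Lemma pre_im (U T : finType) (f : U -> T) (inj : injective f) (a : {set U}) :
  f @^-1: (f @: a) = a.
Proof. by apply/setP => u; rewrite inE mem_imset. Qed.

Lemma im_pre (U T : finType) (f : U -> T) (b : {set T}) :
  b \subset f @: [set: U] -> f @: (f @^-1: b) = b.
Proof.
move=> /subsetP sb; apply/setP => y; apply/imsetP/idP.
  by case=> u; rewrite inE => h ->.
move=> yb; have /imsetP[u _ e] := sb y yb; exists u => //.
by rewrite inE -e.
Qed.

Lemma sub_im (U T : finType) (f : U -> T) (inj : injective f) (a b : {set U}) :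
  (f @: a \subset f @: b) = (a \subset b).
Proof.
apply/idP/idP; last exact: imsetS.
move=> /subsetP h; apply/subsetP => u ua.
by have := h (f u); rewrite !mem_imset //; apply.
Qed.

Lemma tr_SQS (U T : finType) (f : U -> T) (inj : injective f) A' :
  is_SQS [set: U] A' -> is_SQS (f @: [set: U]) (imB f A').
Proof.
move=> [hb hc]; split.
  rewrite /imB; move=> b /imsetP[a aA ->]; split; first by apply: imsetS; apply: subsetT.
  by rewrite card_imset //; have [_ ->] := hb a aA.
move=> t tD t3; set t' := f @^-1: t.
have ht : t = f @: t' by rewrite im_pre.
have t'3 : #|t'| = 3 by rewrite -(card_imset _ inj) -ht.
have -> : [set a in imB f A' | t \subset a] =
          (fun a : {set U} => f @: a) @: [set a in A' | t' \subset a].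
  rewrite /imB.
  apply/setP => b; rewrite inE; apply/andP/imsetP.
    case=> /imsetP[a aA ->]; rewrite ht sub_im // => ta.
    by exists a; rewrite // inE aA.
  case=> a; rewrite inE => /andP[aA ta] ->; split; first by apply: imset_f.
  by rewrite ht sub_im.
by rewrite card_imset; [exact: hc (subsetT t') t'3 | exact: imset_inj].
Qed.

Lemma tr_der (U T : finType) (f : U -> T) (inj : injective f) A' x' b :
  b \in derived (imB f A') (f x') ->
  f @^-1: b \in derived A' x' /\ b = f @: (f @^-1: b).
Proof.
case/derivedP => a0 /imsetP[a aA ->] [xa ->].
have x'a : x' \in a by rewrite -(mem_imset _ _ inj).
have e : f @^-1: (f @: a :\ f x') = a :\ x'.
  by apply/setP => u; rewrite !inE (inj_eq inj) mem_imset.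
rewrite e; split; first by apply/derivedP; exists a.
rewrite -e im_pre //; apply: (subset_trans (subD1set _ _)).
by apply: imsetS; apply: subsetT.
Qed.

Lemma tr_res (U T : finType) (f : U -> T) (inj : injective f) A' g x' :
  #|U| = g + 2 -> is_SQS [set: U] A' ->
  resolvable ([set: U] :\ x') (derived A' x') ->
  exists c : {set T} -> nat,
    (forall b, b \in derived (imB f A') (f x') -> c b < g %/ 2) /\
    proper_col (derived (imB f A') (f x')) c.
Proof.
move=> hU hsqs hres.
have sts := sqs_sts hsqs (in_setT x').
have hY : #|[set: U] :\ x'| = g.+1.
  by move: (cardsD1 x' [set: U]); rewrite in_setT cardsT hU; lia.
have [c [hb hp]] := resolv_bound sts hres hY.
exists (fun b : {set T} => c (f @^-1: b)); split.
  by move=> b /(tr_der inj) [h _]; apply: hb.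
move=> b1 b2 /(tr_der inj)[h1 e1] /(tr_der inj)[h2 e2] ne ec.
rewrite e1 e2 imset_disjoint //; apply: hp => //.
by apply: contra_neq ne => e; rewrite e1 e2 e.
Qed.
End Transport.

Lemma recolour (T : finType) (K : eqType) (B : {set {set T}}) (c : {set T} -> K) k
  (s : seq K) : proper_col B c -> size s <= k -> (forall b, b \in B -> c b \in s) ->
  0 < k -> colourable B k.
Proof.
case: k => // k hp hs hin _.
exists (fun b => inord (index (c b) s)) => b1 b2 b1B b2B ne e.
apply: hp => //.
have i1 : index (c b1) s < k.+1 by apply: leq_trans hs; rewrite index_mem hin.
have i2 : index (c b2) s < k.+1 by apply: leq_trans hs; rewrite index_mem hin.
have : index (c b1) s = index (c b2) s.
  by move: (congr1 (@nat_of_ord _) e); rewrite !inordK.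
by move=> ei; rewrite -(nth_index (c b1) (hin _ b1B)) ei nth_index // hin.
Qed.

Lemma chi_lbv v k : chi_is v k -> v %% 3 = 1 -> v + 1 <= 2 * k.
Proof.
move=> [[B [sts [c hp]]] _] h3.
have v0 : 0 < v by move: h3; case: (v) => //.
have := chi_lb (p := Ordinal v0) sts hp (in_setT _).
by rewrite cardsT card_ord; apply.
Qed.

Lemma chi_is1 : chi_is 1 1.
Proof.
split.
  exists set0; split; last by exists (fun _ => ord0) => b1 b2; rewrite inE.
  split; first by move=> b; rewrite inE.
  by move=> x y _ _; rewrite !ord1 eqxx.
by move=> B j _ [c _]; case: j c => // c; have := c set0; case.
Qed.

Lemma fillf_ok (T : finType) (D : {set T}) (x0 : T) m :
  #|D| = m -> injective (fun i : 'I_m => nth x0 (enum D) i) /\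
  (fun i : 'I_m => nth x0 (enum D) i) @: [set: 'I_m] = D.
Proof.
move=> hD; split.
  move=> i j /eqP; rewrite nth_uniq ?enum_uniq -?cardE ?hD // => /eqP; exact: val_inj.
apply/setP => y; apply/imsetP/idP.
  by case=> i _ ->; rewrite -mem_enum mem_nth // -cardE hD.
move=> yD; have hi : index y (enum D) < m by rewrite -hD cardE index_mem mem_enum.
by exists (Ordinal hi); rewrite // nth_index // mem_enum.
Qed.
Lemma main_constr (T : finType) g n (S : {set T}) G A (A' : {set {set 'I_(g+2)}}) :
  #|T| = g * n + 2 -> n %% 3 = 0 -> cDCQS1 [set: T] S G g n A ->
  RDSQS [set: 'I_(g+2)] A' -> exists An, mcDSQS [set: T] An.
Proof.
move=> hT h3 [[_ [hpart [hGn [hGg [hAb [hA1 hA0]]]]]] [hS2 [hgc [H hgd]]]]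
  [hA'sqs hA'res].
have [x0 x0S] : exists x0, x0 \in S by apply/card_gt0P; rewrite hS2.
move: hpart => /and3P[/eqP hcov htriv h0G].
have Gsub G0 : G0 \in G -> G0 \subset [set: T] :\: S.
  by move=> G0G; rewrite -hcov; apply: bigcup_sup.
have GnS G0 y : G0 \in G -> y \in G0 -> y \notin S.
  by move=> G0G yG; have /subsetP/(_ y yG) := Gsub G0 G0G; rewrite !inE => /andP[].
have Guniq G1 G2 y : G1 \in G -> G2 \in G -> y \in G1 -> y \in G2 -> G1 = G2.
  by move=> G1G G2G y1 y2; rewrite -(def_pblock htriv G1G y1) (def_pblock htriv G2G y2).
have cSG G0 : G0 \in G -> #|S :|: G0| = g + 2.
  move=> G0G; have := cardsUI S G0.
  have -> : S :&: G0 = set0.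
    apply/setP => y; rewrite !inE; apply/negbTE/negP => /andP[yS yG].
    by move: (GnS G0 y G0G yG); rewrite yS.
  rewrite cards0 hS2 (hGg G0 G0G); lia.
set ff := fun (G0 : {set T}) (i : 'I_(g+2)) => nth x0 (enum (S :|: G0)) i.
set fill := fun G0 => imB (ff G0) A'.
have ffok G0 : G0 \in G -> injective (ff G0) /\ ff G0 @: [set: 'I_(g+2)] = S :|: G0.
  by move=> G0G; apply: fillf_ok; apply: cSG.
have fillSQS G0 : G0 \in G -> is_SQS (S :|: G0) (fill G0).
  by move=> G0G; have [inj <-] := ffok G0 G0G; apply: tr_SQS.
have fillsub G0 a : G0 \in G -> a \in fill G0 -> a \subset S :|: G0.
  by move=> G0G aF; have [hb _] := fillSQS G0 G0G; have [] := hb a aF.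
set An := A :|: \bigcup_(G0 in G) fill G0.
have AnP a : a \in An -> a \in A \/ exists2 G0, G0 \in G & a \in fill G0.
  by rewrite inE => /orP[|/bigcupP[G0 G0G aF]]; [left | right; exists G0].
have t3S (t : {set T}) : #|t| = 3 -> exists2 y, y \in t & y \notin S.
  move=> t3; apply/subsetPn/negP => /subset_leq_card; rewrite t3 hS2 //.
have sqs : is_SQS [set: T] An.
  split.
    move=> a /AnP[aA|[G0 G0G aF]]; split; rewrite ?subsetT //.
      by have [] := hAb a aA.
    by have [hb _] := fillSQS G0 G0G; have [] := hb a aF.
  move=> t _ t3.
  have [y yt yS] := t3S t t3.
  case: (boolP [exists G0 in G, t \subset S :|: G0]) => [/exists_inP[G0 G0G tG0]|hno].
    have /eqP/cards1P[a1 ha1] := (fillSQS G0 G0G).2 t tG0 t3.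
    have hA : #|[set a in A | t \subset a]| = 0.
      by apply: (hA0 t (subsetT t) t3); exists G0.
    have := cards0_eq hA => hA'.
    have : a1 \in [set a in fill G0 | t \subset a] by rewrite ha1 set11.
    rewrite inE => /andP[a1F ta1].
    apply/eqP/cards1P; exists a1; apply/setP => a; rewrite in_set in_set1.
    apply/andP/eqP; last first.
      by move=> ->; split=> //; rewrite inE; apply/orP; right; apply/bigcupP; exists G0.
    case=> /AnP[aA|[G1 G1G aF]] ta.
      have : a \in [set a in A | t \subset a] by rewrite inE aA ta.
      by rewrite hA' inE.
    have e : G1 = G0.
      have /subsetP/(_ y yt) := subset_trans ta (fillsub G1 a G1G aF).
      have /subsetP/(_ y yt) := tG0.
      rewrite !inE (negbTE yS) /= => y0 y1; exact: Guniq y1 y0.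
    move: aF; rewrite e => aF.
    have : a \in [set a in fill G0 | t \subset a] by rewrite inE aF ta.
    by rewrite ha1 inE => /eqP.
  have hA1' : #|[set a in A | t \subset a]| = 1.
    apply: (hA1 t (subsetT t) t3) => G0 G0G; apply/negP => tG; move/negP: hno; apply.
    by apply/exists_inP; exists G0.
  have /eqP/cards1P[a1 ha1] := hA1'.
  have : a1 \in [set a in A | t \subset a] by rewrite ha1 set11.
  rewrite inE => /andP[a1A ta1].
  apply/eqP/cards1P; exists a1; apply/setP => a; rewrite in_set in_set1.
  apply/andP/eqP; last by move=> ->; split=> //; rewrite inE a1A.
  case=> /AnP[aA|[G1 G1G aF]] ta.
    have : a \in [set a in A | t \subset a] by rewrite inE aA ta.
    by rewrite ha1 inE => /eqP.
  move/negP: hno; case; apply/exists_inP; exists G1 => //.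
  exact: subset_trans ta (fillsub G1 a G1G aF).
exists An; split => // x _.
have sts := sqs_sts sqs (in_setT x).
split => //.
have hX y : #|[set: T] :\ y| = g * n + 1.
  by move: (cardsD1 y [set: T]); rewrite in_setT cardsT hT; lia.
have dAnP b : b \in derived An x ->
    b \in derived A x \/ exists2 G0, G0 \in G & b \in derived (fill G0) x.
  case/derivedP => a /AnP[aA|[G0 G0G aF]] [xa ->]; [left|right; exists G0 => //];
    by apply/derivedP; exists a.
have dsub G0 b : G0 \in G -> b \in derived (fill G0) x -> b \subset (S :|: G0) :\ x.
  by move=> G0G /derivedP[a aF [xa ->]]; apply: setSD; apply: fillsub aF.
have geven : ~~ odd g by have [] := hgd x0 x0S.
have eg : g = g %/ 2 * 2 by rewrite divnK // dvdn2.
have mod3 : (g * n + 1) %% 3 = 1.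
  by rewrite -(divnK (_ : 3 %| n)) ?mulnA ?modnMDl //; apply/eqP.
have fres G0 y : G0 \in G -> y \in S :|: G0 -> exists cF : {set T} -> nat,
    (forall b, b \in derived (fill G0) y -> cF b < g %/ 2) /\
    proper_col (derived (fill G0) y) cF.
  move=> G0G; have [inj him] := ffok G0 G0G; rewrite -him => /imsetP[x' _ ->].
  apply: tr_res => //; first by rewrite card_ord.
  exact: hA'res x' (in_setT x').
case: (boolP (x \in S)) => xS; last first.
  have : x \in cover G by rewrite hcov !inE xS.
  case/bigcupP => G0 G0G xG0.
  have [_ [k [hk [c [hpc [C [hC hCd]]]]]]] := hgc G0 x G0G xG0.
  have lb := chi_lbv hk; rewrite hX in lb; have {}lb := lb mod3.
  have xD : x \in S :|: G0 by rewrite inE xG0 orbT.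
  have [cF [hcFb hcFp]] := fres G0 x G0G xD.
  have hH : #|(G0 :|: S) :\ x| = g + 1.
    by rewrite setUC; move: (cardsD1 x (S :|: G0)); rewrite xD cSG //; lia.
  rewrite hX hH in hC.
  have Cbig : g %/ 2 <= #|C|.
    rewrite hC; have npos : 0 < n by rewrite -hGn; apply/card_gt0P; exists G0.
    move: lb; rewrite eg; set h := g %/ 2; nia.
  exists k; split => //.
  pose col b := if b \in derived A x then c b else nth (c set0) (enum C) (cF b).
  exists col => b1 b2 b1D b2D ne.
  have inF b : b \in derived An x -> b \notin derived A x -> b \in derived (fill G0) x.
    move=> /dAnP[->//|[G1 G1G bF]] _.
    suff e : G1 = G0 by rewrite -e.
    move: bF => /derivedP[a aF [xa _]].
    have /subsetP/(_ x xa) := fillsub G1 a G1G aF.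
    rewrite inE (negbTE xS) /= => xG1; exact: Guniq xG1 xG0.
  have inC b : b \in derived (fill G0) x -> nth (c set0) (enum C) (cF b) \in C.
    move=> bF; rewrite -mem_enum mem_nth // -cardE.
    exact: leq_trans (hcFb b bF) Cbig.
  have dis b b' : b \in derived A x -> b' \in derived (fill G0) x -> c b \in C ->
      [disjoint b & b'].
    move=> bA bF cC; apply: disjointWr (dsub G0 b' G0G bF) _.
    by rewrite setUC; apply: hCd.
  rewrite /col; case: ifP => h1; case: ifP => h2 e.
  - exact: hpc.
  - have h2F := inF b2 b2D (negbT h2).
    by apply: dis => //; rewrite e; apply: inC.
  - have h1F := inF b1 b1D (negbT h1).
    by rewrite disjoint_sym; apply: dis => //; rewrite -e; apply: inC.
  - have h1F := inF b1 b1D (negbT h1); have h2F := inF b2 b2D (negbT h2).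
    apply: hcFp => //; apply/eqP; move/eqP: e.
    rewrite nth_uniq ?enum_uniq // -cardE; exact: leq_trans (hcFb _ _) Cbig.
case: (posnP n) => [n0|npos].
  exists 1; split; first by rewrite hX n0 muln0 add0n; exact: chi_is1.
  exists (fun _ => ord0) => b1 b2 /derivedP[a aAn _].
  have [hb _] := sqs; have [_ ca] := hb a aAn.
  by have := max_card (mem a); rewrite ca hT n0 muln0.
have [G0 G0G] : exists G0, G0 \in G by apply/card_gt0P; rewrite hGn.
have [x1 x1G] : exists x1, x1 \in G0.
  by apply/set0Pn; apply: contraNneq h0G => <-.
have [_ [k [hk _]]] := hgc G0 x1 G0G x1G.
rewrite hX in hk; have lb := chi_lbv hk mod3.
have [_ [[_ [_ [_ [hgb _]]]] [HG [c [hpc hcm]]]]] := hgd x xS.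
have hF G1 : exists cF : {set T} -> nat, G1 \in G ->
    (forall b, b \in derived (fill G1) x -> cF b < g %/ 2) /\
    proper_col (derived (fill G1) x) cF.
  case: (boolP (G1 \in G)) => G1G; last by exists (fun _ => 0).
  have xD : x \in S :|: G1 by rewrite inE xS.
  by have [cF hcF] := fres G1 x G1G xD; exists cF.
pose F G1 := proj1_sig (constructive_indefinite_description _ (hF G1)).
have hFs G1 : G1 \in G -> (forall b, b \in derived (fill G1) x -> F G1 b < g %/ 2) /\
    proper_col (derived (fill G1) x) (F G1).
  exact: (proj2_sig (constructive_indefinite_description _ (hF G1))).
pose col b : option ({set T} * nat) :=
  if b \in derived A x then omap (fun p : {set T} * 'I_(g %/ 2) => (p.1, val p.2)) (c b)
  else if [pick G1 in G | b \in derived (fill G1) x] is Some G1 then Some (G1, F G1 b)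
  else None.
exists k; rewrite hX; split => //.
apply: (@recolour _ _ _ col k
  (None :: [seq Some (G1, i) | G1 <- enum G, i <- iota 0 (g %/ 2)])).
- move=> b1 b2 b1D b2D ne; rewrite /col.
  have pickS b : b \in derived An x -> b \notin derived A x -> exists G1,
      [/\ [pick G1 in G | b \in derived (fill G1) x] = Some G1, G1 \in G &
       b \in derived (fill G1) x].
    move=> bD bA; case: pickP => [G1 /andP[G1G bF]|hn]; first by exists G1.
    exfalso; case: (dAnP b bD) => [h|[G1 G1G bF]]; first by rewrite h in bA.
    by move: (hn G1); rewrite G1G bF.
  have dis (b b' G1 : {set T}) : b \in derived A x -> [disjoint b & G1] -> G1 \in G ->
      b' \in derived (fill G1) x -> [disjoint b & b'].
    move=> bA dj G1G bF; apply/disjP => y yb yb'.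
    have [/subsetP/(_ y yb)] := hgb b bA; rewrite !inE => /andP[yS _] _.
    have /subsetP/(_ y yb') := dsub G1 b' G1G bF.
    rewrite !inE (negbTE yS) /= => /andP[_ yG1].
    by move: (disjointFr dj yb); rewrite yG1.
  case: ifP => h1; case: ifP => h2.
  + move=> e; apply: hpc => //; move: e.
    case: (c b1) => [[G1 i]|]; case: (c b2) => [[G2 j]|] //=.
    by case=> -> /val_inj ->.
  + have [G2 [hp2 G2G b2F]] := pickS b2 b2D (negbT h2); rewrite hp2.
    have := hcm b1 h1; case: (c b1) => [[G3 i]|] //= [_ dj] [eG _].
    by subst G3; apply: dis dj G2G b2F.
  + have [G1 [hp1 G1G b1F]] := pickS b1 b1D (negbT h1); rewrite hp1.
    have := hcm b2 h2; case: (c b2) => [[G3 i]|] //= [_ dj] [eG _].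
    by subst G3; rewrite disjoint_sym; apply: dis dj G1G b1F.
  + have [G1 [hp1 G1G b1F]] := pickS b1 b1D (negbT h1); rewrite hp1.
    have [G2 [hp2 G2G b2F]] := pickS b2 b2D (negbT h2); rewrite hp2.
    case=> eG; subst G2 => eF; exact: (hFs G1 G1G).2.
- rewrite /= size_allpairs size_iota -cardE hGn.
  move: lb; rewrite eg; set h := g %/ 2; nia.
- move=> b bD; rewrite /col; case: ifP => h1.
    have := hcm b h1; case: (c b) => [[G1 i] [G1G _]|_] /=; last exact: mem_head.
    rewrite in_cons; apply/orP; right.
    by apply: (@allpairs_f _ _ _ (fun (G2 : {set T}) (i0 : nat) => Some (G2, i0)));
      rewrite ?mem_enum ?mem_iota ?add0n ?ltn_ord.

  case: pickP => [G1 /andP[G1G bF]|_]; last exact: mem_head.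
  rewrite in_cons; apply/orP; right;
    apply: (@allpairs_f _ _ _ (fun (G2 : {set T}) (i0 : nat) => Some (G2, i0)));
    rewrite ?mem_enum ?mem_iota ?add0n //.
  exact: (hFs G1 G1G).1.
- by move: lb; lia.
Qed.

Theorem mainTheorem15 (g n : nat) :
  n %% 3 = 0 -> exists_cDCQS1 g n -> exists_RDSQS (g + 2) ->
  exists_mcDSQS (g * n + 2).
Proof.
move=> h3 [S [G [A hc]]] [A' hr].
exact: (main_constr (card_ord _) h3 hc hr).
Qed.
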